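(* For every $J\subseteq[n]$ and every $i\in[n]$, the element $q_{J,i}$ lies in $SI^B_n$. Moreover $q_{J,i}\in\bigoplus_{K:\,|K|=|J|,\ J\le_{\mathrm{Gale}}K}\mathbb C[\mathbf x_n]\cdot\theta_K$, and its component in $\mathbb C[\mathbf x_n]\cdot\theta_J$ equals $\pm\,p_{J,i}\cdot\theta_J$.
   Context: Let $n\ge1$, $\mathbb C[\mathbf x_n]=\mathbb C[x_1,\dots,x_n]$. The superspace is $\Omega_n=\mathbb C[\mathbf x_n]\otimes\wedge\{\theta_1,\dots,\theta_n\}$: the $\theta_i$ anticommute among themselves and commute with the $x_j$. For $J=\{j_1<\dots<j_k\}\subseteq[n]$, $\theta_J=\theta_{j_1}\cdots\theta_{j_k}$; every element of $\Omega_n$ is uniquely $\sum_J f_J\theta_J$ with $f_J\in\mathbb C[\mathbf x_n]$. The group $\mathfrak B_n$ of signed permutations (bijections $\pi$ of $\{\pm1,\dots,\pm n\}$ with $\pi(-i)=-\pi(i)$) acts on $\Omega_n$ by algebra automorphisms via $\pi(x_i)=x_{\pi(i)}$, $\pi(\theta_i)=\theta_{\pi(i)}$, with $x_{-i}=-x_i$, $\theta_{-i}=-\theta_i$. $SI^B_n$ is the ideal of $\Omega_n$ generated by the $\mathfrak B_n$-invariant elements with zero constant term. The operator $\partial_i$ acts on $\Omega_n$ as $\partial/\partial x_i$, treating the $\theta$'s as constants, and $d(f)=\sum_{i=1}^n\partial_i(f)\,\theta_i$. Gale order: for subsets of equal size $\{a_1<\dots<a_r\}\le_{\mathrm{Gale}}\{b_1<\dots<b_r\}$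 iff $a_s\le b_s$ for all $s$. For $S\subseteq[n]$ and an integer $r$, $h^2_r(S)$ is the complete homogeneous symmetric polynomial of degree $r$ in the variables $\{x_s^2:s\in S\}$ (with $h^2_0(S)=1$ and $h^2_r(S)=0$ for $r<0$). For $J\subseteq[n]$ and $i\in[n]$ put $r_i=n-|J\cup\{i,\dots,n\}|+1$, and define $q_{J,i}=h^2_{r_i}(J\cup\{i,\dots,n\})\cdot\theta_J$ if $i\notin J$, $q_{J,i}=d\big(h^2_{r_i}(J\cup\{i,\dots,n\})\big)\cdot\theta_{J\setminus\{i\}}$ if $i\in J$; and $p_{J,i}=h^2_{r_i}(J\cup\{i,\dots,n\})$ if $i\notin J$, $p_{J,i}=\partial_i h^2_{r_i}(J\cup\{i,\dots,n\})$ if $i\in J$. *)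

(* Defs.v *)
From mathcomp Require Import all_boot all_order all_algebra all_fingroup all_field.
From mathcomp Require Import mpoly.
Set Implicit Arguments. Unset Strict Implicit. Unset Printing Implicit Defensive.
Import GRing.Theory.
Local Open Scope ring_scope.

Section Super.
Variable n : nat.

(* C[x_1..x_n]; indices [n] = {1..n} are represented 0-based by 'I_n *)
Definition poly := {mpoly algC[n]}.

(* The superspace Omega_n: an element sum_J f_J theta_J is stored as the
   finite function J |-> f_J (its coordinates in the basis theta_J). *)
Definition super := {ffun {set 'I_n} -> poly}.

(* theta_I * theta_J = sgn(I,J) theta_(I u J) when I, J disjoint, where
   sgn(I,J) = (-1)^#{(i,j) in I x J | j < i}, and 0 otherwise. *)
Definition ssign (I J : {set 'I_n}) : poly :=
  (-1) ^+ #|[set p : 'I_n * 'I_n | (p.1 \in I) && (p.2 \in J) && (p.2 < p.1)%N]|.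

Definition smul (a b : super) : super :=
  [ffun K => \sum_(I : {set 'I_n}) \sum_(J : {set 'I_n} |
      (I :&: J == set0) && (I :|: J == K)) ssign I J * a I * b J].

Definition sconst (f : poly) : super := [ffun K => if K == set0 then f else 0].

Definition sone : super := sconst 1.

Definition thetaJ (J : {set 'I_n}) : super := [ffun K => if K == J then 1 else 0].
Definition theta (i : 'I_n) : super := thetaJ [set i].

(* Signed permutations: pi(i) = (-1)^(e i) * s(i) for s a permutation of [n]
   and e a sign vector; this is a bijective encoding of B_n. *)
Definition sgnp (e : {ffun 'I_n -> bool}) (i : 'I_n) : algC := (-1) ^+ e i.

Definition pact (s : {perm 'I_n}) (e : {ffun 'I_n -> bool}) (f : poly) : poly :=
  f \mPo [tuple (sgnp e i) *: 'X_(s i) | i < n].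

(* algebra automorphism: f theta_{j1}..theta_{jk} |-> pi(f) theta_{pi j1} .. theta_{pi jk} *)
Definition sact (s : {perm 'I_n}) (e : {ffun 'I_n -> bool}) (F : super) : super :=
  \sum_(J : {set 'I_n})
    smul (sconst (pact s e (F J)))
         (foldr smul sone [seq sgnp e j *: theta (s j) | j <- enum J]).

Definition Binvariant (F : super) : Prop :=
  forall (s : {perm 'I_n}) (e : {ffun 'I_n -> bool}), sact s e F = F.

Definition const_term (F : super) : algC := (F set0)@_0%MM.

Definition in_ideal (S : super -> Prop) (F : super) : Prop :=
  exists (m : nat) (a g b : 'I_m -> super),
    (forall k, S (g k)) /\ F = \sum_(k < m) smul (smul (a k) (g k)) (b k).

Definition SIB (F : super) : Prop :=
  in_ideal (fun g => Binvariant g /\ const_term g = 0) F.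

Definition sd (f : poly) : super := \sum_(i < n) smul (sconst (mderiv i f)) (theta i).

Definition h2 (r : nat) (S : {set 'I_n}) : poly :=
  \sum_(m : 'X_{1..n < r.+1} | (mdeg m == r) &&
            [forall j : 'I_n, (j \notin S) ==> (m j == 0%N)]) ('X_[m] ^+ 2).

(* {i,...,n} (0-based) *)
Definition tailset (i : 'I_n) : {set 'I_n} := [set j : 'I_n | (i <= j)%N].

(* r_i = n - |J u {i..n}| + 1 (always >= 1) *)
Definition rr (J : {set 'I_n}) (i : 'I_n) : nat := (n.+1 - #|J :|: tailset i|)%N.

Definition qJi (J : {set 'I_n}) (i : 'I_n) : super :=
  let h := h2 (rr J i) (J :|: tailset i) in
  if i \notin J then smul (sconst h) (thetaJ J)
  else smul (sd h) (thetaJ (J :\ i)).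

Definition pJi (J : {set 'I_n}) (i : 'I_n) : poly :=
  let h := h2 (rr J i) (J :|: tailset i) in
  if i \notin J then h else mderiv i h.

(* Gale order on subsets of equal size; enum lists elements increasingly *)
Definition gale (A B : {set 'I_n}) : bool :=
  all2 (fun a b : 'I_n => (a <= b)%N) (enum A) (enum B).

End Super.

(* Main.v *)
Require Import Defs.
From mathcomp Require Import all_boot all_order all_algebra all_fingroup all_field.
From mathcomp Require Import mpoly.
Set Implicit Arguments. Unset Strict Implicit. Unset Printing Implicit Defensive.
Import GRing.Theory.
Local Open Scope ring_scope.

Section S.
Variable n : nat.
Local Notation poly := (Defs.poly n).
Local Notation super := (Defs.super n).

Definition scale (f : poly) (X : super) : super := [ffun K => f * X K].

Lemma ssign0l (T : {set 'I_n}) : ssign set0 T = 1.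
Proof.
rewrite /ssign; set A := [set _ | _].
have -> : A = set0 by apply/setP=> p; rewrite !inE.
by rewrite cards0 expr0.
Qed.

Lemma ssign0r (T : {set 'I_n}) : ssign T set0 = 1.
Proof.
rewrite /ssign; set A := [set _ | _].
have -> : A = set0 by apply/setP=> p; rewrite !inE andbF.
by rewrite cards0 expr0.
Qed.

Lemma smul_sconstl f X : smul (sconst f) X = scale f X.
Proof.
apply/ffunP=> K; rewrite !ffunE.
rewrite (bigD1 (set0 : {set 'I_n})) //=.
rewrite [X in _ + X]big1 ?addr0; last first.
  move=> I /negbTE HI; apply: big1 => J _; by rewrite ffunE HI mulr0 mul0r.
rewrite (eq_bigl (pred1 K)) => [|J]; last by rewrite /= set0I set0U eqxx.
by rewrite big_pred1_eq ssign0l !ffunE eqxx mul1r.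
Qed.

Lemma smul_sone_r X : smul X (sone n) = X.
Proof.
apply/ffunP=> K; rewrite !ffunE (bigD1 K) //=.
rewrite [X in _ + X]big1 ?addr0; last first.
  move=> I HI; apply: big1 => J /andP[_ /eqP HU].
  rewrite ffunE; case: eqP => [HJ0|]; last by rewrite mulr0.
  by move: HI; rewrite -HU HJ0 setU0 eqxx.
rewrite (eq_bigl (pred1 set0)) => [|J]; last first.
  rewrite /=; apply/idP/idP => [/andP[/eqP HI /eqP HU]|/eqP ->].
    apply/eqP/setP => x; rewrite in_set0; apply/negP => Hx.
    have : x \in K :&: J by rewrite inE Hx andbT -HU inE Hx orbT.
    by rewrite HI in_set0.
  by rewrite setI0 setU0 !eqxx.
by rewrite big_pred1_eq ssign0r !ffunE eqxx mul1r mulr1.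
Qed.

Lemma smul_sone_l X : smul (sone n) X = X.
Proof.
rewrite /sone smul_sconstl; apply/ffunP=> K; by rewrite ffunE mul1r.
Qed.

Lemma smulDl (X Y Z : super) : smul (X + Y) Z = smul X Z + smul Y Z.
Proof.
apply/ffunP=> K; rewrite !ffunE -big_split /=; apply: eq_bigr => I _.
rewrite -big_split /=; apply: eq_bigr => J _; by rewrite ffunE mulrDr mulrDl.
Qed.

Lemma smul0l (Z : super) : smul 0 Z = 0.
Proof.
apply/ffunP=> K; rewrite !ffunE big1 // => I _; rewrite big1 // => J _.
by rewrite ffunE mulr0 mul0r.
Qed.

Lemma smul_suml (I : Type) (r : seq I) (P : pred I) (F : I -> super) Z :
  smul (\sum_(k <- r | P k) F k) Z = \sum_(k <- r | P k) smul (F k) Z.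
Proof.
elim/big_rec2: _ => [|k y1 y2 _ <-]; first exact: smul0l.
by rewrite smulDl.
Qed.

Lemma smul_scalel f (X Y : super) : smul (scale f X) Y = scale f (smul X Y).
Proof.
apply/ffunP=> K; rewrite !ffunE mulr_sumr; apply: eq_bigr => I _.
rewrite mulr_sumr; apply: eq_bigr => J _; rewrite ffunE.
by rewrite !mulrA [ssign I J * f]mulrC.
Qed.

Lemma scaleDl (f g : poly) X : scale (f + g) X = scale f X + scale g X.
Proof. by apply/ffunP=> K; rewrite !ffunE mulrDl. Qed.

Lemma scaleDr (f : poly) (X Y : super) : scale f (X + Y) = scale f X + scale f Y.
Proof. by apply/ffunP=> K; rewrite !ffunE mulrDr. Qed.

Lemma sscale0r (f : poly) : scale f 0 = 0.
Proof. by apply/ffunP=> K; rewrite !ffunE mulr0. Qed.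

Lemma sscale0l (X : super) : scale 0 X = 0.
Proof. by apply/ffunP=> K; rewrite !ffunE mul0r. Qed.

Lemma sscale1 (X : super) : scale 1 X = X.
Proof. by apply/ffunP=> K; rewrite !ffunE mul1r. Qed.

Lemma scaleM (f g : poly) X : scale (f * g) X = scale f (scale g X).
Proof. by apply/ffunP=> K; rewrite !ffunE mulrA. Qed.

Lemma scale_sumr (I : Type) (r : seq I) (P : pred I) (F : I -> super) f :
  scale f (\sum_(k <- r | P k) F k) = \sum_(k <- r | P k) scale f (F k).
Proof.
elim/big_rec2: _ => [|k y1 y2 _ <-]; first exact: sscale0r.
by rewrite scaleDr.
Qed.

Lemma scale_suml (I : Type) (r : seq I) (P : pred I) (F : I -> poly) X :
  scale (\sum_(k <- r | P k) F k) X = \sum_(k <- r | P k) scale (F k) X.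
Proof.
elim/big_rec2: _ => [|k y1 y2 _ <-]; first exact: sscale0l.
by rewrite scaleDl.
Qed.

Lemma sdE (f : poly) : sd f = \sum_(i < n) scale (mderiv i f) (theta i).
Proof. by apply: eq_bigr => i _; rewrite smul_sconstl. Qed.

Lemma sdD (f g : poly) : sd (f + g) = sd f + sd g.
Proof.
rewrite !sdE -big_split /=; apply: eq_bigr => i _; by rewrite mderivD scaleDl.
Qed.

Lemma sdM (c h : poly) : sd (c * h) = scale c (sd h) + scale h (sd c).
Proof.
rewrite !sdE !scale_sumr -big_split /=; apply: eq_bigr => i _.
by rewrite mderivM scaleDl !scaleM addrC -!scaleM mulrC.
Qed.


Definition sel (m1 m2 : nat) (A : 'I_m1 -> super) (B : 'I_m2 -> super)
  (k : 'I_(m1 + m2)) : super :=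
  match split k with inl x => A x | inr y => B y end.

Lemma sel_l m1 m2 A B (k : 'I_m1) : @sel m1 m2 A B (lshift m2 k) = A k.
Proof. by rewrite /sel (unsplitK (inl k)). Qed.

Lemma sel_r m1 m2 A B (k : 'I_m2) : @sel m1 m2 A B (rshift m1 k) = B k.
Proof. by rewrite /sel (unsplitK (inr k)). Qed.

Lemma SIB_add (F G : super) : SIB F -> SIB G -> SIB (F + G).
Proof.
move=> [m1 [a1 [g1 [b1 [Hg1 ->]]]]] [m2 [a2 [g2 [b2 [Hg2 ->]]]]].
exists (m1 + m2), (sel a1 a2), (sel g1 g2), (sel b1 b2); split.
  by move=> k; rewrite /sel; case: (split k).
rewrite big_split_ord /=; congr (_ + _); apply: eq_bigr => k _;
  by rewrite ?sel_l ?sel_r.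
Qed.

Lemma SIB_scale (c : poly) (F : super) : SIB F -> SIB (scale c F).
Proof.
move=> [m [a [g [b [Hg ->]]]]].
exists m, (fun k => scale c (a k)), g, b; split => //.
by rewrite scale_sumr; apply: eq_bigr => k _; rewrite !smul_scalel.
Qed.

Lemma SIB_gen (G T : super) : (Binvariant G /\ const_term G = 0) ->
  SIB (smul G T).
Proof.
move=> HG; exists 1%N, (fun _ => sone n), (fun _ => G), (fun _ => T); split => //.
by rewrite big_ord1 smul_sone_l.
Qed.

Definition Good (h : poly) :=
  (forall T, SIB (scale h T)) /\ (forall T, SIB (smul (sd h) T)).

Lemma Good_add h1 h2 : Good h1 -> Good h2 -> Good (h1 + h2).
Proof.
move=> [A1 B1] [A2 B2]; split => T.
  by rewrite scaleDl; apply: SIB_add.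
by rewrite sdD smulDl; apply: SIB_add.
Qed.

Lemma Good_mul c h : Good h -> Good (c * h).
Proof.
move=> [A B]; split => T.
  by rewrite scaleM; apply: SIB_scale.
rewrite sdM smulDl !smul_scalel; apply: SIB_add; first by apply: SIB_scale.
exact: A.
Qed.

Lemma Good_sub h1 h2 : Good h1 -> Good h2 -> Good (h1 - h2).
Proof.
move=> G1 G2; apply: Good_add => //; rewrite -mulN1r; exact: Good_mul.
Qed.

Lemma Good_gen G : Binvariant (sconst G) -> const_term (sconst G) = 0 ->
  Binvariant (sd G) -> const_term (sd G) = 0 -> Good G.
Proof.
move=> H1 H2 H3 H4; split => T.
  by rewrite -smul_sconstl; apply: SIB_gen.
exact: SIB_gen.
Qed.

End S.

Section S2.
Variable n : nat.
Local Notation poly := (Defs.poly n).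
Local Notation super := (Defs.super n).

Definition hc (r : nat) (S : {set 'I_n}) (u : 'X_{1..n}) : bool :=
  [forall j, ~~ odd (u j) && ((j \notin S) ==> (u j == 0%N))] && (mdeg u == r.*2).

Lemma h2E r S u : (h2 r S)@_u = (hc r S u)%:R.
Proof.
rewrite /h2 raddf_sum /=.
under eq_bigr => m _ do rewrite mpolyXn mcoeffX.
case: (boolP (hc r S u)) => H.
  move: (H) => /andP[/forallP Hf /eqP Hd].
  set m0 := [multinom (u j)./2 | j < n].
  have Hsum : (mdeg u = (mdeg m0).*2)%N.
    rewrite !mdegE -muln2 big_distrl /=; apply: eq_bigr => j _.
    rewrite mnmE muln2; move: (Hf j) => /andP[Hev _].
    by rewrite -{1}(odd_double_half (u j)) (negbTE Hev).
  have Hm0 : (mdeg m0 = r)%N by apply: double_inj; rewrite -Hsum.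
  have Hb : (mdeg m0 < r.+1)%N by rewrite Hm0.
  have Hu : (m0 *+ 2)%MM = u.
    apply/mnmP => j; rewrite mulmnE mnmE muln2.
    move: (Hf j) => /andP[Hev _].
    by rewrite -{2}(odd_double_half (u j)) (negbTE Hev).
  rewrite (bigD1 (BMultinom Hb)) /=; last first.
    rewrite Hm0 eqxx /=; apply/forallP => j; apply/implyP => Hj.
    move: (Hf j) => /andP[_ /implyP /(_ Hj) /eqP Hz].
    by rewrite mnmE Hz.
  rewrite Hu eqxx big1 ?addr0 // => m /andP[_ Hne].
  case: eqP => // Hmu; exfalso; move/negP: Hne; apply; apply/eqP.
  apply: val_inj => /=; apply/mnmP => j; rewrite mnmE -Hmu mulmnE muln2.
  by rewrite doubleK.
rewrite big1 // => m /andP[/eqP Hd /forallP Hf].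
case: eqP => // Hmu; exfalso; move/negP: H; apply.
apply/andP; split.
  apply/forallP => j; rewrite -Hmu mulmnE muln2 odd_double /=.
  by move: (Hf j) => /implyP Hj; apply/implyP => /Hj /eqP ->.
by rewrite -Hmu mdegMn Hd muln2.
Qed.


Lemma mcoeff_XM (w u : 'X_{1..n}) (P : poly) :
  ('X_[w] * P)@_u = if (w <= u)%MM then P@_(u - w) else 0.
Proof.
rewrite mulrC; case: ifP => Hle.
  by rewrite -{1}(submK Hle) addmC mcoeffMX.
rewrite mcoeffM big1 // => k /eqP Hk; rewrite mcoeffX.
case: eqP => [Hw|]; last by rewrite mulr0.
exfalso; move/negP: Hle; apply; apply/mnm_lepP => j.
by rewrite Hk mnmDE Hw leq_addl.
Qed.

Lemma h2_rec k (Y : {set 'I_n}) (z : 'I_n) : z \notin Y ->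
  h2 k.+1 Y = h2 k.+1 (z |: Y) - 'X_[U_(z) *+ 2] * h2 k (z |: Y).
Proof.
move=> zY; apply/mpolyP => u; rewrite mcoeffB mcoeff_XM !h2E.
set w := (U_(z) *+ 2)%MM.
have Hw j : w j = (2 * (z == j))%N by rewrite mulmnE mnm1E mulnC.
case: ifP => Hle.
  have Huz : (2 <= u z)%N by move/mnm_lepP: Hle => /(_ z); rewrite Hw eqxx.
  have -> : hc k.+1 Y u = false.
    apply/negbTE/negP => /andP[/forallP/(_ z)/andP[_ /implyP/(_ zY)/eqP H0] _].
    by rewrite H0 in Huz.
  suff -> : hc k.+1 (z |: Y) u = hc k (z |: Y) (u - w) by rewrite subrr.
  rewrite /hc; congr andb.
    apply: eq_forallb => j; rewrite mnmBE Hw in_setU1.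
    case: (eqVneq z j) => [<-|Hzj] /=.
      by rewrite muln1 oddB //= addbF.
    by rewrite -[(2 * _)%N]/0%N subn0.
  have Hd : mdeg u = (mdeg (u - w) + 2)%N.
    by rewrite -{1}(submK Hle) mdegD mdegMn mdeg1.
  by rewrite Hd doubleS addn2 eqSS.
rewrite subr0.
have Huz : (u z < 2)%N.
  rewrite ltnNge; apply/negP => H2; move/negP: Hle; apply.
  apply/mnm_lepP => j; rewrite Hw; case: (eqVneq z j) => [<-|_] //.
move: Huz; case Hz: (u z) => [|[|//]] _.
  congr (_%:R); rewrite /hc; congr andb; apply: eq_forallb => j; rewrite in_setU1.
  case: (eqVneq j z) => [->|Hjz] /=; last by [].
  by rewrite Hz /= implybT.
rewrite /hc; have F S : [forall j, ~~ odd (u j) && ((j \notin S) ==> (u j == 0%N))] = false.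
  by apply/negbTE/negP => /forallP/(_ z); rewrite Hz.
by rewrite !F.
Qed.

End S2.

Section S3.
Variable n : nat.
Local Notation poly := (Defs.poly n).
Local Notation super := (Defs.super n).
Variables (s : {perm 'I_n}) (e : {ffun 'I_n -> bool}).
Local Notation sg := (sgnp e).
Local Notation pa := (pact s e).

Lemma sg2 i : sg i * sg i = 1.
Proof. by rewrite /sgnp -expr2 sqrr_sign. Qed.

Lemma pactXU j : pa 'X_j = sg j *: 'X_(s j).
Proof. by rewrite /pact comp_mpolyXU -tnth_nth tnth_mktuple. Qed.

Lemma pactM f g : pa (f * g) = pa f * pa g.
Proof. by rewrite /pact rmorphM. Qed.

Lemma pact1 : pa 1 = 1.
Proof. by rewrite /pact rmorph1. Qed.

Lemma pactD f g : pa (f + g) = pa f + pa g.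
Proof. by rewrite /pact raddfD. Qed.

Lemma pact0 : pa 0 = 0.
Proof. by rewrite /pact raddf0. Qed.

Lemma pactZ c f : pa (c *: f) = c *: pa f.
Proof. by rewrite /pact comp_mpolyZ. Qed.

Lemma mderiv1 i : mderiv i (1 : poly) = 0.
Proof. by rewrite -mpolyC1 mderivC. Qed.

Lemma mderivXU i j : mderiv i ('X_j : poly) = (j == i)%:R.
Proof.
rewrite mderivX mnm1E; case: eqP => [->|_]; last by rewrite scale0r.
have -> : (U_(i) - U_(i) = 0)%MM by rewrite -{1}[U_(i)%MM]add0m addmK.
by rewrite mpolyX0 scale1r.
Qed.

Lemma chain_mono d (m : 'X_{1..n}) : mdeg m = d -> forall i,
  pa (mderiv i 'X_[m]) = sg i *: mderiv (s i) (pa 'X_[m]).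
Proof.
elim: d m => [|d IH] m Hm i.
  move/eqP: Hm; rewrite mdeg_eq0 => /eqP ->.
  by rewrite mpolyX0 mderiv1 pact1 mderiv1 pact0 scaler0.
have [j Hj] : exists j, (0 < m j)%N.
  case: (pickP (fun j => 0 < m j)%N) => [j Hj|H0]; first by exists j.
  have : mdeg m = 0%N.
    by rewrite mdegE big1 // => j _; move: (H0 j); rewrite lt0n => /negbFE/eqP.
  by rewrite Hm.
have Hle : (U_(j) <= m)%MM.
  by apply/mnm_lepP => l; rewrite mnm1E; case: eqP => [<-|].
have Hd : mdeg (m - U_(j)) = d.
  by apply/eqP; rewrite -eqSS -Hm -{2}(submK Hle) mdegD mdeg1 addn1.
rewrite -(submK Hle) mpolyXD mulrC mderivM.
rewrite pactD !pactM (IH _ Hd) mderivXU pactXU.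
rewrite mderivM mderivZ mderivXU.
rewrite scalerDr -!scalerAl -!scalerAr scalerA.
case: (eqVneq j i) => [->|Hji].
  by rewrite !scalerA sg2 scale1r eqxx pact1 !mul1r.
rewrite (inj_eq (@perm_inj _ s)) (negbTE Hji) /= mulr0n pact0 !mul0r !scaler0 !add0r.
by rewrite !scalerA mulrC.
Qed.

Lemma chain f i : pa (mderiv i f) = sg i *: mderiv (s i) (pa f).
Proof.
elim/mpolyind: f => [|c m p _ _ IH].
  by rewrite mderiv0 pact0 mderiv0 scaler0.
rewrite mderivD pactD IH pactD mderivD scalerDr; congr (_ + _).
by rewrite mderivZ pactZ pactZ mderivZ (chain_mono (erefl _)) scalerA mulrC -scalerA.
Qed.


Definition phi (m : 'X_{1..n}) : 'X_{1..n} := [multinom m ((s^-1)%g j) | j < n].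

Lemma mdeg_phi m : mdeg (phi m) = mdeg m.
Proof.
rewrite !mdegE [RHS](reindex_inj (@perm_inj _ (s^-1)%g)) /=.
by apply: eq_bigr => j _; rewrite mnmE.
Qed.

Lemma pactX2 m : pa ('X_[m] ^+ 2) = 'X_[phi m] ^+ 2.
Proof.
rewrite /pact rmorphXn /= comp_mpolyX (mpolyXE _ s (phi m)).
rewrite -!prodrXl; apply: eq_bigr => j _.
rewrite tnth_mktuple mnmE permK exprAC exprZn.
by rewrite /sgnp sqrr_sign scale1r exprAC.
Qed.

Lemma pact_h2 k : pa (h2 k setT) = h2 k setT.
Proof.
rewrite /h2 /pact raddf_sum /=.
have Hb (m : 'X_{1..n < k.+1}) : (mdeg (phi m) < k.+1)%N by rewrite mdeg_phi bmdeg.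
pose phib (m : 'X_{1..n < k.+1}) : 'X_{1..n < k.+1} := BMultinom (Hb m).
have phib_inj : injective phib.
  move=> m1 m2 /(congr1 val) /= /mnmP H; apply: val_inj; apply/mnmP => j.
  by move: (H (s j)); rewrite !mnmE permK.
rewrite [RHS](reindex_inj phib_inj) /=.
apply: eq_big => [m|m _].
  rewrite mdeg_phi; congr andb; apply/forallP/forallP => _ j; by rewrite in_setT.
exact: pactX2.
Qed.

Definition prodJ (J : {set 'I_n}) : super :=
  foldr (@smul n) (sone n) [seq sg j *: theta (s j) | j <- enum J].

Lemma sactE F : sact s e F = \sum_J scale (pa (F J)) (prodJ J).
Proof. by apply: eq_bigr => J _; rewrite smul_sconstl. Qed.

Lemma sact_sconst G : pa G = G -> sact s e (sconst G) = sconst G.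
Proof.
move=> HG; rewrite sactE (bigD1 set0) //= big1 ?addr0.
  rewrite ffunE eqxx HG /prodJ enum_set0 /=.
  by apply/ffunP => K; rewrite !ffunE; case: eqP; rewrite ?mulr1 ?mulr0.
by move=> J /negbTE HJ; rewrite ffunE HJ pact0 sscale0l.
Qed.

Lemma ffZ (c : algC) (X : super) K : (c *: X) K = c *: X K.
Proof. by rewrite ffunE. Qed.

Lemma sactD F1 F2 : sact s e (F1 + F2) = sact s e F1 + sact s e F2.
Proof.
rewrite !sactE -big_split /=; apply: eq_bigr => J _.
by rewrite ffunE pactD scaleDl.
Qed.

Lemma sact0 : sact s e 0 = 0.
Proof.
rewrite sactE big1 // => J _; by rewrite ffunE pact0 sscale0l.
Qed.

Lemma sact_sum (I : Type) (r : seq I) (P : pred I) (F : I -> super) :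
  sact s e (\sum_(k <- r | P k) F k) = \sum_(k <- r | P k) sact s e (F k).
Proof.
elim/big_rec2: _ => [|k y1 y2 _ <-]; first exact: sact0.
by rewrite sactD.
Qed.

Lemma sact_theta f T : sact s e (scale f (thetaJ T)) = scale (pa f) (prodJ T).
Proof.
rewrite sactE (bigD1 T) //= big1 ?addr0.
  by rewrite !ffunE eqxx mulr1.
by move=> J /negbTE HJ; rewrite !ffunE HJ mulr0 pact0 sscale0l.
Qed.

Lemma prodJ1 i : prodJ [set i] = sg i *: theta (s i).
Proof. by rewrite /prodJ enum_set1 /= smul_sone_r. Qed.

Lemma scaleZZ (c : algC) f (X : super) : c * c = 1 ->
  scale (c *: f) (c *: X) = scale f X.
Proof.
move=> Hc; apply/ffunP => K; rewrite !ffunE -scalerAl -scalerAr scalerA Hc.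
by rewrite scale1r.
Qed.

Lemma sact_sd G : pa G = G -> sact s e (sd G) = sd G.
Proof.
move=> HG; rewrite {1}sdE sact_sum.
under eq_bigr => i _ do rewrite sact_theta prodJ1 chain HG scaleZZ ?sg2 //.
by rewrite sdE [RHS](reindex_inj (@perm_inj _ s)).
Qed.

End S3.

Section S4.
Variable n : nat.
Local Notation poly := (Defs.poly n).
Local Notation super := (Defs.super n).

Lemma set0_neq1 (i : 'I_n) : (set0 == [set i]) = false.
Proof.
apply/negbTE/eqP => H; have := set11 i; by rewrite -H inE.
Qed.

Lemma Good_top k : Good (h2 k.+1 (setT : {set 'I_n})).
Proof.
apply: Good_gen.
- by move=> s e; apply: sact_sconst; apply: pact_h2.
- by rewrite /const_term ffunE eqxx h2E /hc mdeg0 andbF.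
- by move=> s e; apply: sact_sd; apply: pact_h2.
rewrite /const_term sdE sum_ffunE big1 ?mcoeff0 // => i _.
by rewrite !ffunE set0_neq1 mulr0.
Qed.

Lemma Good_h2 d : forall k (Y : {set 'I_n}), (n - #|Y|)%N = d ->
  (n < k + #|Y|)%N -> Good (h2 k Y).
Proof.
have HY (Y : {set 'I_n}) : (#|Y| <= n)%N by rewrite -[X in (_ <= X)%N]card_ord max_card.
elim: d => [|d IH] k Y Hd Hk.
  have HYn : #|Y| = n by apply/eqP; rewrite eqn_leq HY /= -subn_eq0 Hd.
  have HT : Y = setT.
    by apply/eqP; rewrite eqEcard subsetT cardsT card_ord HYn /=.
  rewrite HT.
  case: k Hk => [|k] Hk; last exact: Good_top.
  by rewrite add0n HYn ltnn in Hk.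
have [z zY] : exists z, z \notin Y.
  case: (pickP (fun z => z \notin Y)) => [z Hz|H0]; first by exists z.
  have : Y = setT by apply/setP => z; rewrite in_setT; move: (H0 z) => /negbFE.
  by move=> HT; move: Hd; rewrite HT cardsT card_ord subnn.
have Hc : #|z |: Y| = #|Y|.+1 by rewrite cardsU1 zY.
case: k Hk => [|k] Hk; first by move: (HY Y); rewrite leqNgt Hk.
rewrite (h2_rec k zY); apply: Good_sub.
  apply: (IH); first by rewrite Hc subnS Hd.
  by rewrite Hc addnS ltnS ltnW.
apply: Good_mul; apply: IH; first by rewrite Hc subnS Hd.
by rewrite Hc addnS.
Qed.

End S4.

Section S5.
Variable n : nat.
Local Notation poly := (Defs.poly n).
Local Notation super := (Defs.super n).

Definition ltO := fun x y : 'I_n => (x < y)%N.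
Definition leO := fun x y : 'I_n => (x <= y)%N.

Lemma ltO_trans : transitive ltO.
Proof. move=> y x z; exact: ltn_trans. Qed.

Lemma ordF (x y : 'I_n) : (x < y)%N -> (y == x) = false.
Proof. by move=> H; apply/negbTE/eqP => E; rewrite E ltnn in H. Qed.

Lemma ordF' (x y : 'I_n) : (x < y)%N -> (x == y) = false.
Proof. by move=> H; rewrite eq_sym ordF. Qed.

Lemma all2_refl (l : seq 'I_n) : all2 leO l l.
Proof. by elim: l => //= a l ->; rewrite /leO leqnn. Qed.

Lemma galeM (B : pred 'I_n) (k : 'I_n) : k \notin B -> forall l (a : 'I_n),
  sorted ltO l -> k \in l -> (a <= k)%N -> all (leO a) l ->
  all2 leO (a :: filter B l) (filter (predU (pred1 k) B) l).
Proof.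
move=> kB; elim => [//|y l IH] a /= Hs Hk Hak /andP[Hay Hal].
have Hsl : sorted ltO l := path_sorted Hs.
have Hyl : all (ltO y) l := order_path_min ltO_trans Hs.
case: (eqVneq y k) => [Hyk|Hyk] /=.
  subst y; rewrite Hay /=.
  have -> : B k = false by apply/negbTE.
  rewrite (@eq_in_filter _ (predU (pred1 k) B) B l) ?all2_refl //.
  move=> x Hx; move/allP: Hyl => /(_ x Hx); rewrite /ltO /= => Hkx.
  have /negbTE -> : x != k by apply/eqP => E; rewrite E ltnn in Hkx.
  by [].
move: Hk; rewrite in_cons eq_sym (negbTE Hyk) /= => Hk.
have Hyk' : (y < k)%N by move/allP: Hyl => /(_ k Hk).
case HB : (B y) => /=.
  rewrite Hay /=; apply: IH => //; first exact: ltnW.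
  by apply/allP => x Hx; move/allP: Hyl => /(_ x Hx) /ltnW.
exact: IH.
Qed.

Lemma galeL (B : pred 'I_n) (i k : 'I_n) : i \notin B -> k \notin B ->
  (i < k)%N -> forall l, sorted ltO l -> i \in l -> k \in l ->
  all2 leO (filter (predU (pred1 i) B) l) (filter (predU (pred1 k) B) l).
Proof.
move=> iB kB Hik; elim => [//|y l IH] /= Hs Hi Hk.
have Hsl : sorted ltO l := path_sorted Hs.
have Hyl : all (ltO y) l := order_path_min ltO_trans Hs.
case: (eqVneq y i) => [Hyi|Hyi] /=.
  subst y; rewrite /= [i == k]eq_sym (ordF Hik) /=.
  have -> : B i = false by apply/negbTE.
  rewrite (@eq_in_filter _ (predU (pred1 i) B) B l).
    apply: galeM => //; first by move: Hk; rewrite in_cons (ordF Hik).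
      exact: ltnW.
    by apply/allP => x Hx; move/allP: Hyl => /(_ x Hx) /ltnW.
  move=> x Hx; move/allP: Hyl => /(_ x Hx); rewrite /ltO /= => Hkx.
  have /negbTE -> : x != i by apply/eqP => E; rewrite E ltnn in Hkx.
  by [].
move: Hi; rewrite in_cons eq_sym (negbTE Hyi) /= => Hi.
have Hyi' : (y < i)%N by move/allP: Hyl => /(_ i Hi).
have Hyk : y != k by rewrite (ordF' (ltn_trans Hyi' Hik)).
move: Hk; rewrite in_cons eq_sym (negbTE Hyk) /= => Hk.
case: (B y) => /=; last exact: IH.
by rewrite /leO leqnn IH.
Qed.

Lemma sorted_enum : sorted ltO (enum 'I_n).
Proof.
have := iota_ltn_sorted 0 n; by rewrite -val_enum_ord sorted_map.
Qed.

Lemma enum_filter (A : {set 'I_n}) : enum A = filter (mem A) (enum 'I_n).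
Proof. by rewrite /enum_mem filter_predT. Qed.

Lemma gale_step (T : {set 'I_n}) (i k : 'I_n) : i \notin T -> k \notin T ->
  (i <= k)%N -> gale (i |: T) (k |: T).
Proof.
move=> iT kT; rewrite leq_eqVlt => /orP[/eqP/val_inj ->|Hik].
  by rewrite /gale all2_refl.
rewrite /gale !enum_filter.
rewrite (@eq_filter _ _ (predU (pred1 i) (mem T))); last by move=> x; rewrite /= in_setU1.
rewrite (@eq_filter _ (mem (k |: T)) (predU (pred1 k) (mem T))); last by move=> x; rewrite /= in_setU1.
by apply: galeL => //; [exact: sorted_enum|rewrite mem_enum|rewrite mem_enum].
Qed.

End S5.

Section S6.
Variable n : nat.
Local Notation poly := (Defs.poly n).
Local Notation super := (Defs.super n).

Lemma smul_thetaJ (X : super) T K : smul X (thetaJ T) K =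
  \sum_(I | (I :&: T == set0) && (I :|: T == K)) ssign I T * X I.
Proof.
rewrite ffunE [RHS]big_mkcond /=; apply: eq_bigr => I _.
case: ifP => HP.
  rewrite (bigD1 T) //= big1 ?addr0; first by rewrite ffunE eqxx mulr1.
  by move=> J /andP[_ HJ]; rewrite ffunE (negbTE HJ) mulr0.
rewrite big1 // => J HJ; rewrite ffunE; case: eqP => [HJT|]; last by rewrite mulr0.
by rewrite HJT HP in HJ.
Qed.

Lemma deriv_h2_out r (S : {set 'I_n}) k : k \notin S -> mderiv k (h2 r S) = 0.
Proof.
move=> kS; apply/mpolyP => u; rewrite mcoeff_deriv h2E mcoeff0.
suff -> : hc r S (u + U_(k)) = false by rewrite /= mulr0n mul0rn.
apply/negbTE/negP => /andP[/forallP/(_ k)/andP[_ /implyP Hk] _].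
by move: (Hk kS); rewrite mnmDE mnm1E eqxx addn1.
Qed.

Lemma sum_neq0 (I : finType) (P : pred I) (F : I -> poly) :
  \sum_(i | P i) F i != 0 -> exists i, P i && (F i != 0).
Proof.
move=> H; case: (pickP (fun i => P i && (F i != 0))) => [i Hi|H0]; first by exists i.
move: H; rewrite big1 ?eqxx // => i Pi; move: (H0 i); by rewrite Pi /= => /negbFE/eqP.
Qed.

Lemma sdI (h : poly) I : sd h I = \sum_(k < n) mderiv k h * (I == [set k])%:R.
Proof.
rewrite sdE sum_ffunE; apply: eq_bigr => k _; rewrite !ffunE.
by case: eqP.
Qed.

Lemma sd1 (h : poly) i : sd h [set i] = mderiv i h.
Proof.
rewrite sdI (bigD1 i) //= eqxx mulr1 big1 ?addr0 // => k Hk.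
suff -> : ([set i] == [set k]) = false by rewrite mulr0.
apply/negbTE/eqP => E; move/eqP: Hk; apply; apply/set1_inj; by rewrite E.
Qed.

End S6.

Theorem mainTheorem2 (n : nat) (J : {set 'I_n}) (i : 'I_n) :
  SIB (qJi J i) /\
  (forall K : {set 'I_n}, qJi J i K != 0 -> #|K| = #|J| /\ gale J K) /\
  (qJi J i J = pJi J i \/ qJi J i J = - pJi J i).
Proof.
have HY (Y : {set 'I_n}) : (#|Y| <= n)%N by rewrite -[X in (_ <= X)%N]card_ord max_card.
rewrite /qJi /pJi /=.
set S := J :|: tailset i; set h := h2 (rr J i) S.
have [G1 G2] : Good h.
  apply: (@Good_h2 n (n - #|S|)%N) => //.
  rewrite /rr -/S subnK //; exact: leqW.
case: ifP => /= Hi.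
  split; first by rewrite smul_sconstl; apply: G1.
  split.
    move=> K; rewrite smul_thetaJ => /sum_neq0 [I /andP[/andP[_ /eqP HU] HI]].
    case: (eqVneq I set0) => [HI0|HI0]; last by move: HI; rewrite ffunE (negbTE HI0) mulr0 eqxx.
    move: HU; rewrite HI0 set0U => <-; split => //; by rewrite /gale all2_refl.
  left; rewrite smul_thetaJ (bigD1 set0) /=; last by rewrite set0I set0U !eqxx.
  rewrite big1 ?addr0; first by rewrite ssign0l ffunE eqxx mul1r.
  by move=> I /andP[_ HI]; rewrite ffunE (negbTE HI) mulr0.
move/negbFE: Hi => Hi.
split; first exact: G2.
split.
  move=> K; rewrite smul_thetaJ => /sum_neq0 [I /andP[/andP[/eqP HI /eqP HU] HX]].
  have HX' : sd h I != 0 by apply: contraNneq HX => ->; rewrite mulr0.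
  move: HX'; rewrite sdI => /sum_neq0 [k /andP[_ Hk]].
  have /eqP HIk : I == [set k] by apply: contraNT Hk => /negbTE ->; rewrite mulr0 eqxx.
  have Hdk : mderiv k h != 0 by apply: contraNneq Hk => ->; rewrite mul0r.
  have kS : k \in S by apply: contraNT Hdk => /deriv_h2_out ->.
  have kT : k \notin J :\ i.
    apply/negP => kT; have : k \in [set k] :&: (J :\ i) by rewrite inE set11 kT.
    by rewrite -HIk HI inE.
  have HK : K = k |: (J :\ i) by rewrite -HU HIk.
  have HJ : J = i |: (J :\ i) by rewrite setD1K.
  have iT : i \notin J :\ i by rewrite !inE eqxx.
  split; first by rewrite HK cardsU1 kT [in RHS]HJ cardsU1 iT.
  rewrite {1}HJ HK; apply: gale_step => //.
  move: kS; rewrite inE => /orP[kJ|].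
    have : k \in i |: (J :\ i) by rewrite -HJ.
    rewrite in_setU1 (negbTE kT) orbF => /eqP ->; exact: leqnn.
  by rewrite inE.
have HI1 I : (I :&: (J :\ i) == set0) && (I :|: (J :\ i) == J) -> I = [set i].
  move=> /andP[/eqP HI /eqP HU]; apply/setP => x; rewrite inE.
  apply/idP/idP => [Hx|/eqP ->].
    apply/negPn/negP => Hxi.
    have Hxj : x \in J by rewrite -HU inE Hx.
    have : x \in I :&: (J :\ i) by rewrite inE Hx !inE Hxi Hxj.
    by rewrite HI inE.
  have : i \in I :|: (J :\ i) by rewrite HU.
  by rewrite inE !inE eqxx /= orbF.
rewrite smul_thetaJ (bigD1 [set i]) /=; last first.
  apply/andP; split.
    apply/eqP/setP => x; rewrite !inE; case: eqP => // ->; by rewrite eqxx.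
  by rewrite (setD1K Hi).
rewrite big1 ?addr0; last first.
  by move=> I /andP[/HI1 -> /negbTE]; rewrite eqxx.
rewrite sd1 /ssign -signr_odd; case: odd; rewrite ?expr0 ?expr1 ?mul1r ?mulN1r.
  by right.
by left.
Qed.
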